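(* Let $\phi_1,\dots,\phi_m:\mathbb{R}^n\to\mathbb{R}$ be softmax-type functions, i.e. for each $i\in[m]$ there are $j_i\in[n]$ and $\xi_{i1},\dots,\xi_{in}\ge0$ with $\sum_k\xi_{ik}=1$ such that $\phi_i(z)=\frac{\exp(z_{j_i})}{\sum_{k=1}^n\xi_{ik}\exp(z_k)}$. Let $\sum_{\gamma\in\mathbb{Z}_{\ge0}^n}a_\gamma z^\gamma$ be the Taylor series at $0$ of $\prod_{i=1}^m\phi_i$. Then for every integer $k\ge0$, $$\sum_{\gamma\in\mathbb{Z}_{\ge0}^n:\,|\gamma|=k}|a_\gamma|\le(e^3m)^k.$$
   Context: $z^\gamma=z_1^{\gamma_1}\cdots z_n^{\gamma_n}$ and $|\gamma|=\gamma_1+\dots+\gamma_n$. *)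

(* Defs.v *)
From HB Require Import structures.
From mathcomp Require Import all_boot all_order all_algebra.
From mathcomp Require Import all_classical all_reals all_analysis.
Set Implicit Arguments. Unset Strict Implicit. Unset Printing Implicit Defensive.
Import Order.TTheory GRing.Theory Num.Theory.
Import numFieldNormedType.Exports.
Local Open Scope ring_scope.

(* Points of R^n are row vectors 'rV[R]_n; z_j is written z ord0 j. *)

Definition basis_vec (R : realType) (n : nat) (j : 'I_n) : 'rV[R]_n :=
  \row_k (k == j)%:R.

Definition partial (R : realType) (n : nat) (j : 'I_n)
  (f : 'rV[R]_n -> R) : 'rV[R]_n -> R :=
  fun z => 'D_(basis_vec R j) f z.

Definition dpartial (R : realType) (n : nat) (gamma : 'I_n -> nat)
  (f : 'rV[R]_n -> R) : 'rV[R]_n -> R :=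
  foldr (fun j g => iter (gamma j) (partial j) g) f (enum 'I_n).

Definition taylor_coef (R : realType) (n : nat) (f : 'rV[R]_n -> R)
  (gamma : 'I_n -> nat) : R :=
  dpartial gamma f 0 / (\prod_(j < n) (gamma j)`!)%:R.

Definition softmax_type (R : realType) (n : nat) (j : 'I_n) (xi : 'I_n -> R)
  (z : 'rV[R]_n) : R :=
  expR (z ord0 j) / \sum_(k < n) xi k * expR (z ord0 k).

(* Main.v *)
Require Import Defs.
From HB Require Import structures.
From mathcomp Require Import all_boot all_order all_algebra.
From mathcomp Require Import all_classical all_reals all_analysis.
From mathcomp Require Import ring lra zify.
Import Order.TTheory GRing.Theory Num.Theory.
Import numFieldNormedType.Exports.
Local Open Scope ring_scope.



Section Deriv.
Variables (R : realType) (n : nat).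
Implicit Types (f : 'rV[R]_n -> R).

Lemma derive_1d f x v : 'D_v f x = 'D_(1:R) (fun h : R => f (h *: v + x)) 0.
Proof.
rewrite /derive; set g1 := fun h => h^-1 *: _; set g2 := fun h => h^-1 *: _.
suff -> : g1 = g2 by [].
by rewrite funeqE /g1 /g2 => h /=; rewrite addr0 scale0r add0r [_%:A]mulr1.
Qed.

Lemma is_derive_1d f x v df :
  is_derive x v f df <-> is_derive (0:R) (1:R) (fun h : R => f (h *: v + x)) df.
Proof.
split => -[d e]; constructor.
- by move/derivable1P: d.
- by rewrite -derive_1d.
- by apply/derivable1P.
- by rewrite derive_1d.
Qed.

Lemma is_derive_comp f (g : R -> R) x v a b :
  is_derive (f x) 1 g a -> is_derive x v f b -> is_derive x v (g \o f) (a * b).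
Proof.
move=> hg /is_derive_1d hf; apply/is_derive_1d.
have e : (fun h : R => f (h *: v + x)) 0 = f x by rewrite /= scale0r add0r.
rewrite -e in hg.
exact: (@is_derive1_comp _ g (fun h : R => f (h *: v + x)) 0 a b hg hf).
Qed.

Lemma is_derive_coord x v j : is_derive x v (fun z : 'rV[R]_n => z ord0 j) (v ord0 j).
Proof.
apply/is_derive_1d.
have -> : (fun h : R => (h *: v + x) ord0 j) = (v ord0 j) \*: (@id R) + cst (x ord0 j).
  by rewrite funeqE => h /=; rewrite !mxE mulrC.
rewrite -[X in is_derive _ _ _ X]addr0.
apply: is_deriveD.
  rewrite -[X in is_derive _ _ _ X]mulr1.
  exact: is_deriveZ.
Qed.

Lemma is_derive_scal f x v k df :
  is_derive x v f df -> is_derive x v (fun z => k * f z) (k * df).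
Proof. by move=> h; have := is_deriveZ k h. Qed.

Lemma is_derive_sumf m (F : 'I_m -> 'rV[R]_n -> R) x v dF :
  (forall i, is_derive x v (F i) (dF i)) ->
  is_derive x v (fun z => \sum_(i < m) F i z) (\sum_(i < m) dF i).
Proof.
move=> h; have := is_derive_sum h.
by have -> : (\sum_(i < m) F i) = (fun z => \sum_(i < m) F i z) by rewrite funeqE => z; rewrite fct_sumE.
Qed.

Lemma is_derive_addf f g x v df dg :
  is_derive x v f df -> is_derive x v g dg -> is_derive x v (fun z => f z + g z) (df + dg).
Proof. by move=> a b; have := is_deriveD a b. Qed.

End Deriv.



Section G.
Variables (R : realType) (n m : nat) (xi : 'I_m -> 'I_n -> R).
Hypothesis xi_ge0 : forall i k, 0 <= xi i k.
Hypothesis xi_sum : forall i, \sum_(k < n) xi i k = 1.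

Definition S i (z : 'rV[R]_n) := \sum_(k < n) xi i k * expR (z ord0 k).

Lemma S_gt0 i z : 0 < S i z.
Proof.
rewrite lt_def sumr_ge0 ?andbT; last by move=> k _; rewrite mulr_ge0 // expR_ge0.
apply/negP => /eqP/psumr_eq0P H.
have : \sum_(k < n) xi i k = 0.
  apply: big1 => k _.
  have /eqP := H (fun k _ => mulr_ge0 (xi_ge0 i k) (expR_ge0 _)) k isT.
  by rewrite mulf_eq0 (gt_eqF (expR_gt0 _)) orbF => /eqP.
by rewrite xi_sum => /eqP; rewrite oner_eq0.
Qed.

Definition st := (('I_n -> nat) * ('I_m -> nat))%type.
Definition upd {T : eqType} (f : T -> nat) (t : T) : T -> nat :=
  fun x => (f x + (x == t))%N.

Definition inner (s : st) (z : 'rV[R]_n) :=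
  \sum_(j < n) (s.1 j)%:R * z ord0 j - \sum_(i < m) (s.2 i)%:R * ln (S i z).
Definition Gf (s : st) (z : 'rV[R]_n) := expR (inner s z).

Definition Dr (sg : R) (l : 'I_n) (h : st -> R) : st -> R :=
  fun s => (s.1 l)%:R * h s +
    sg * \sum_(i < m) (s.2 i)%:R * xi i l * h (upd s.1 l, upd s.2 i).

Lemma sum_basis (F : 'I_n -> R) l :
  \sum_(j < n) F j * basis_vec R l ord0 j = F l.
Proof.
rewrite (bigD1 l) //= big1 ?addr0; first by rewrite /basis_vec mxE eqxx mulr1.
by move=> j /negbTE hj; rewrite /basis_vec mxE hj mulr0.
Qed.

Lemma sum_ind (I : finType) (F : I -> R) i0 :
  \sum_(i : I) (i == i0)%:R * F i = F i0.
Proof.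
rewrite (bigD1 i0) //= big1 ?addr0 ?eqxx ?mul1r //.
by move=> j /negbTE ->; rewrite mul0r.
Qed.

Lemma Gf_upd s z l i :
  Gf (upd s.1 l, upd s.2 i) z = Gf s z * expR (z ord0 l) / S i z.
Proof.
rewrite /Gf /inner /upd /=.
have -> : \sum_(j < n) ((s.1 j + (j == l))%N)%:R * z ord0 j =
          \sum_(j < n) (s.1 j)%:R * z ord0 j + z ord0 l.
  rewrite (eq_bigr (fun j => (s.1 j)%:R * z ord0 j + z ord0 j * basis_vec R l ord0 j)).
    by rewrite big_split /= sum_basis.
  by move=> j _; rewrite natrD mulrDl /basis_vec mxE [(_ == _)%:R * _]mulrC.
rewrite (eq_bigr (fun i0 => (s.2 i0)%:R * ln (S i0 z) + (i0 == i)%:R * ln (S i0 z))); last first.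
  by move=> j _; rewrite natrD mulrDl.
rewrite big_split /= sum_ind.
set A := \sum_(j < n) _. set B := \sum_(i0 < m) _.
have -> : A + z ord0 l - (B + ln (S i z)) = (A - B) + (z ord0 l - ln (S i z)) by ring.
rewrite expRD expRB lnK ?mulrA //.
by rewrite posrE S_gt0.
Qed.

Lemma Gf_der s z l :
  is_derive z (basis_vec R l) (Gf s) (Dr (-1) l (fun s' => Gf s' z) s).
Proof.
set v := basis_vec R l.
have hS : forall i, is_derive z v (S i) (xi i l * expR (z ord0 l)).
  move=> i; rewrite /S -(sum_basis (fun k => xi i k * expR (z ord0 k))).
  apply: is_derive_sumf => k; rewrite -mulrA; apply: is_derive_scal.
  apply: (@is_derive_comp R n (fun z => z ord0 k) expR).
  exact: is_derive_coord.
have hL : is_derive z v (fun z => \sum_(j < n) (s.1 j)%:R * z ord0 j) ((s.1 l)%:R).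
  rewrite -(sum_basis (fun j => (s.1 j)%:R)).
  apply: is_derive_sumf => j; apply: is_derive_scal; exact: is_derive_coord.
have hN : is_derive z v (fun z => \sum_(i < m) (s.2 i)%:R * ln (S i z))
   (\sum_(i < m) (s.2 i)%:R * ((S i z)^-1 * (xi i l * expR (z ord0 l)))).
  apply: is_derive_sumf => i; apply: is_derive_scal.
  exact: (@is_derive_comp R n (S i) (@ln R) _ _ _ _ (is_derive1_ln (S_gt0 i z)) (hS i)).
have hI : is_derive z v (inner s) ((s.1 l)%:R -
   \sum_(i < m) (s.2 i)%:R * ((S i z)^-1 * (xi i l * expR (z ord0 l)))).
  by have := is_deriveB hL hN.
have := @is_derive_comp R n (inner s) expR _ _ _ _ (is_derive_expR (inner s z)) hI.
move=> h; apply: (is_derive_eq h).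
rewrite /Dr mulrDr mulN1r mulrN; congr (_ + - _).
  by rewrite /Gf mulrC.
  rewrite mulr_sumr; apply: eq_bigr => i _; rewrite Gf_upd /Gf. by ring.
Qed.

End G.



Section Ops.
Variables (R : realType) (n m : nat) (xi : 'I_m -> 'I_n -> R).

Local Notation st := (st n m).
Local Notation Dr := (@Dr R n m xi).

Definition Yab sg (a b : 'I_n) (h : st -> R) (s : st) :=
  \sum_(i < m) (s.2 i)%:R * xi i a * (sg * \sum_(i' < m) ((upd s.2 i) i')%:R * xi i' b *
      h (upd (upd s.1 a) b, upd (upd s.2 i) i')).

Lemma Dr_exp sg a b h s : Dr sg a (Dr sg b h) s =
  (s.1 a)%:R * ((s.1 b)%:R * h s) + (s.1 a)%:R * (sg * \sum_(i < m) (s.2 i)%:R * xi i b * h (upd s.1 b, upd s.2 i))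
  + sg * ((upd s.1 a b)%:R * \sum_(i < m) (s.2 i)%:R * xi i a * h (upd s.1 a, upd s.2 i))
  + sg * Yab sg a b h s.
Proof.
rewrite /Dr /Yab /= mulrDr -!addrA; congr (_ + _); congr (_ + _).
rewrite -mulrDr; congr (_ * _).
rewrite mulr_sumr -big_split /=; apply: eq_bigr => i _.
by rewrite mulrDr; congr (_ + _); ring.
Qed.

Lemma Yab_sym sg a b h s : Yab sg a b h s = Yab sg b a h s.
Proof.
rewrite /Yab.
under eq_bigr do rewrite !mulr_sumr.
under [RHS]eq_bigr do rewrite !mulr_sumr.
rewrite [RHS]exchange_big /=; apply: eq_bigr => i _; apply: eq_bigr => i' _.
have -> : (upd (upd s.1 b) a, upd (upd s.2 i') i) = (upd (upd s.1 a) b, upd (upd s.2 i) i').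
  congr (_, _); apply/funext => x; rewrite /upd; lia.
rewrite /upd; case: (eqVneq i' i) => [->|ne]; first by ring.
by rewrite /= !addn0; ring.
Qed.

Lemma Dr_comm sg a b h s : Dr sg a (Dr sg b h) s = Dr sg b (Dr sg a h) s.
Proof.
case: (eqVneq a b) => [->//|ne].
rewrite !Dr_exp Yab_sym /upd (negbTE ne) eq_sym (negbTE ne) !addn0.
ring.
Qed.

End Ops.



Section Fam.
Variables (R : realType) (n m : nat) (xi : 'I_m -> 'I_n -> R).
Hypothesis xi_ge0 : forall i k, 0 <= xi i k.
Hypothesis xi_sum : forall i, \sum_(k < n) xi i k = 1.

Local Notation st := (st n m).
Local Notation Dr := (@Dr R n m xi).

Definition DF sg l (H : st -> 'rV[R]_n -> R) : st -> 'rV[R]_n -> R :=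
  fun s z => Dr sg l (fun s' => H s' z) s.

Definition good (H : st -> 'rV[R]_n -> R) :=
  forall s l z, is_derive z (basis_vec R l) (H s) (DF (-1) l H s z).

Lemma good_Gf : good (@Gf R n m xi).
Proof. move=> s l z; exact: Gf_der. Qed.

Lemma good_DF b H : good H -> good (DF (-1) b H).
Proof.
move=> gH s l z.
have h2 : is_derive z (basis_vec R l)
   (fun z => \sum_(i < m) (s.2 i)%:R * xi i b * H (upd s.1 b, upd s.2 i) z)
   (\sum_(i < m) (s.2 i)%:R * xi i b * DF (-1) l H (upd s.1 b, upd s.2 i) z).
  by apply: is_derive_sumf => i; apply: is_derive_scal; apply: gH.
have h3 : is_derive z (basis_vec R l) (DF (-1) b H s)
   ((s.1 b)%:R * DF (-1) l H s z + (-1) *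
     \sum_(i < m) (s.2 i)%:R * xi i b * DF (-1) l H (upd s.1 b, upd s.2 i) z).
  by apply: is_derive_addf; apply: is_derive_scal => //; apply: gH.
apply: (is_derive_eq h3).
have := @Dr_comm R n m xi (-1) l b (fun s' => H s' z) s.
rewrite /DF => ->.
by rewrite /Dr.

Qed.

Lemma partial_good H s l : good H -> partial l (H s) = DF (-1) l H s.
Proof.
move=> gH; apply/funext => z; rewrite /partial.
by case: (gH s l z) => _ ->.
Qed.

Lemma good_iter j r H : good H -> good (iter r (DF (-1) j) H).
Proof. by move=> gH; elim: r => //= r IH; apply: good_DF. Qed.

Lemma iter_partial j r H s : good H ->
  iter r (partial j) (H s) = iter r (DF (-1) j) H s.
Proof.
move=> gH; elim: r => //= r IH.
by rewrite IH partial_good //; apply: good_iter.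
Qed.

Definition FoldF sg (g : 'I_n -> nat) (L : seq 'I_n) H :=
  foldr (fun j acc => iter (g j) (DF sg j) acc) H L.

Lemma fold_good g L H : good H -> good (FoldF (-1) g L H).
Proof. by move=> gH; elim: L => //= j L IH; apply: good_iter. Qed.

Lemma fold_partial g L H s : good H ->
  foldr (fun j acc => iter (g j) (partial j) acc) (H s) L = FoldF (-1) g L H s.
Proof.
move=> gH; elim: L => //= j L IH.
by rewrite IH iter_partial //; apply: fold_good.
Qed.

Definition FoldR sg (g : 'I_n -> nat) (L : seq 'I_n) (h : st -> R) :=
  foldr (fun j acc => iter (g j) (Dr sg j) acc) h L.

Lemma iter_eval sg j r H z :
  (fun s => iter r (DF sg j) H s z) = iter r (Dr sg j) (fun s => H s z).
Proof. by elim: r => //= r <-. Qed.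

Lemma fold_eval sg g L H z :
  (fun s => FoldF sg g L H s z) = FoldR sg g L (fun s => H s z).
Proof. by elim: L => //= j L <-; rewrite iter_eval. Qed.

Lemma Dr_abs l (h h' : st -> R) : (forall s, `|h s| <= h' s) ->
  forall s, `|Dr (-1) l h s| <= Dr 1 l h' s.
Proof.
move=> hh s; rewrite /Dr mul1r mulN1r.
apply: (le_trans (ler_normD _ _)); apply: lerD.
  by rewrite normrM ger0_norm // ler_wpM2l.
rewrite normrN; apply: (le_trans (ler_norm_sum _ _ _)); apply: ler_sum => i _.
rewrite normrM ger0_norm ?ler_wpM2l //; by rewrite mulr_ge0.
Qed.

Lemma Dr_ge0 l (h : st -> R) : (forall s, 0 <= h s) -> forall s, 0 <= Dr 1 l h s.
Proof.
move=> hh s; rewrite /Dr mul1r; apply: addr_ge0; first by rewrite mulr_ge0.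
by apply: sumr_ge0 => i _; rewrite !mulr_ge0.
Qed.

Lemma foldR_ge0 g L h : (forall s, 0 <= h s) -> forall s, 0 <= FoldR 1 g L h s.
Proof.
move=> hh; elim: L => //= j L IH.
by elim: (g j) => //= r IHr; apply: Dr_ge0.
Qed.

Lemma foldR_abs g L h h' : (forall s, `|h s| <= h' s) ->
  forall s, `|FoldR (-1) g L h s| <= FoldR 1 g L h' s.
Proof.
move=> hh; elim: L => //= j L IH.
by elim: (g j) => //= r IHr; apply: Dr_abs.
Qed.

End Fam.



Section Comb.
Variables (R : realType) (n m : nat) (xi : 'I_m -> 'I_n -> R).

Local Notation st := (st n m).
Local Notation Dr := (@Dr R n m xi).
Local Notation FoldR := (@FoldR R n m xi).

Lemma Dr_commf sg a b h : Dr sg a (Dr sg b h) = Dr sg b (Dr sg a h).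
Proof. by apply/funext => s; apply: Dr_comm. Qed.

Lemma iter_Dr_comm sg a b r h :
  iter r (Dr sg a) (Dr sg b h) = Dr sg b (iter r (Dr sg a) h).
Proof. by elim: r => //= r ->; rewrite Dr_commf. Qed.

Lemma foldR_eq sg (g g' : 'I_n -> nat) L h : {in L, g =1 g'} ->
  FoldR sg g L h = FoldR sg g' L h.
Proof.
elim: L => //= j L IH hg; rewrite IH ?hg ?mem_head //.
by move=> x xL; apply: hg; rewrite in_cons xL orbT.
Qed.

Lemma foldR_shift sg (g g' : 'I_n -> nat) l L h :
  (forall x, g x = (g' x + (x == l))%N) -> uniq L -> l \in L ->
  FoldR sg g L h = Dr sg l (FoldR sg g' L h).
Proof.
move=> hg; elim: L => //= j L IH /andP [jL uL].
rewrite in_cons; case: (eqVneq l j) => [ejl _ | ne /= lL].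
  subst j.
  have -> : FoldR sg g L h = FoldR sg g' L h.
    apply: foldR_eq => x xL; rewrite hg; case: (eqVneq x l) => [exl|]; last by rewrite addn0.
    by move: jL; rewrite -exl xL.
  by rewrite hg eqxx addn1.
rewrite IH // hg eq_sym (negbTE ne) addn0.
by rewrite iter_Dr_comm.
Qed.

Lemma Dr_sum sg l (I : finType) (P : pred I) (F : I -> st -> R) s :
  Dr sg l (fun s' => \sum_(x | P x) F x s') s = \sum_(x | P x) Dr sg l (F x) s.
Proof.
rewrite /Dr mulr_sumr.
rewrite /Dr big_split /=; congr (_ + _).
rewrite -[RHS]mulr_sumr; congr (_ * _); rewrite exchange_big /=.
by apply: eq_bigr => i _; rewrite mulr_sumr.
Qed.

Lemma Dr_scal sg l (F : st -> R) c s :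
  Dr sg l (fun s' => F s' * c) s = Dr sg l F s * c.
Proof.
rewrite /Dr mulrDl -mulrA; congr (_ + _).
rewrite -mulrA mulr_suml; congr (_ * _); apply: eq_bigr => i _; ring.
Qed.

Definition up {k} (l : 'I_n) (g : {ffun 'I_n -> 'I_k.+1}) : {ffun 'I_n -> 'I_k.+2} :=
  [ffun x => inord (g x + (x == l))].
Definition down {k} (l : 'I_n) (g : {ffun 'I_n -> 'I_k.+2}) : {ffun 'I_n -> 'I_k.+1} :=
  [ffun x => inord (g x - (x == l))].

Lemma upE (k : nat) (l : 'I_n) (g : {ffun 'I_n -> 'I_k.+1}) x : (up l g x : nat) = (g x + (x == l))%N.
Proof. by rewrite ffunE inordK //; have := ltn_ord (g x); case: (x == l) => /=; lia. Qed.

Lemma down_up (k : nat) (l : 'I_n) (g : {ffun 'I_n -> 'I_k.+1}) : down l (up l g) = g.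
Proof.
apply/ffunP => x; apply/val_inj; rewrite ffunE upE addnK /= inordK //.
Qed.

Lemma sum_delta (l : 'I_n) : (\sum_(x < n) (x == l) = 1)%N.
Proof.
rewrite (bigD1 l) //= eqxx big1 // => x /negbTE -> //.
Qed.

Lemma sum_up (k : nat) (l : 'I_n) (g : {ffun 'I_n -> 'I_k.+1}) : (\sum_(x < n) (up l g x : nat) = \sum_(x < n) (g x : nat) + 1)%N.
Proof.
rewrite (eq_bigr (fun x => (g x : nat) + (x == l))%N); last by move=> x _; rewrite upE.
by rewrite big_split /= sum_delta.
Qed.

Lemma two_le_sum (g : 'I_n -> nat) x l : x != l -> (g x + g l <= \sum_(j < n) g j)%N.
Proof.
move=> ne; rewrite (bigD1 x) //= leq_add2l (bigD1 l) /=; last by rewrite eq_sym.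
exact: leq_addr.
Qed.

Lemma up_down k l (g : {ffun 'I_n -> 'I_k.+2}) :
  (\sum_(j < n) (g j : nat) == k.+1)%N && (0 < g l)%N -> up l (down l g) = g.
Proof.
move=> /andP [/eqP hs hl]; apply/ffunP => x; apply/val_inj => /=; rewrite upE ffunE inordK.
  by case: (eqVneq x l) => [->|] /=; [rewrite subn1 addn1 prednK|rewrite subn0 addn0].
case: (eqVneq x l) => [->|ne] /=.
  by have := ltn_ord (g l); lia.
have := @two_le_sum (fun j => (g j : nat)) x l ne; rewrite hs /=; lia.
Qed.

Lemma fact_up (k : nat) (l : 'I_n) (g : {ffun 'I_n -> 'I_k.+1}) : (\prod_(x < n) (up l g x)`! = (g l).+1 * \prod_(x < n) (g x)`!)%N.
Proof.
rewrite (bigD1 l) //= [in RHS](bigD1 l) //= upE eqxx addn1 factS -!mulnA; congr (_ * (_ * _))%N.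
by apply: eq_bigr => x /negbTE hx; rewrite upE hx addn0.
Qed.

Definition Q sg k (h : st -> R) (s : st) : R :=
  \sum_(gamma : {ffun 'I_n -> 'I_k.+1} | (\sum_(j < n) (gamma j : nat) == k)%N)
    FoldR sg (fun j => (gamma j : nat)) (enum 'I_n) h s /
      (\prod_(j < n) (gamma j)`!)%:R.

Lemma Q_rec_l sg k h s l :
  \sum_(gamma : {ffun 'I_n -> 'I_k.+2} | (\sum_(j < n) (gamma j : nat) == k.+1)%N)
    (gamma l : nat)%:R * (FoldR sg (fun j => (gamma j : nat)) (enum 'I_n) h s /
      (\prod_(j < n) (gamma j)`!)%:R) =
  \sum_(gamma : {ffun 'I_n -> 'I_k.+1} | (\sum_(j < n) (gamma j : nat) == k)%N)
    Dr sg l (FoldR sg (fun j => (gamma j : nat)) (enum 'I_n) h) s /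
      (\prod_(j < n) (gamma j)`!)%:R.
Proof.
rewrite (bigID (fun g : {ffun 'I_n -> 'I_k.+2} => (0 < g l)%N)) /=.
rewrite [X in _ + X]big1 ?addr0; last first.
  by move=> g /andP [_]; rewrite lt0n negbK => /eqP ->; rewrite mul0r.
rewrite (reindex_onto (up l) (down l)); last by move=> g; apply: up_down.
apply: eq_big => g.
  by rewrite sum_up down_up eqxx andbT upE eqxx addn1 /= eqSS addn1 andbT.
move=> _.
rewrite (@foldR_shift sg (fun j => (up l g j : nat)) (fun j => (g j : nat)) l); last first.
- exact: mem_enum.
- exact: enum_uniq.
- by move=> x; rewrite upE.
rewrite fact_up upE eqxx addn1 natrM.
have h1 : (g l).+1%:R != 0 :> R by rewrite pnatr_eq0.
have h2 : (\prod_(x < n) (g x)`!)%:R != 0 :> R.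
  by rewrite pnatr_eq0 -lt0n prodn_gt0 // => x; exact: fact_gt0.
field; rewrite h2 /=; by rewrite -natr1 addrC in h1.
Qed.

Lemma Q_rec sg k h s :
  (k.+1)%:R * Q sg k.+1 h s = \sum_(l < n) Dr sg l (Q sg k h) s.
Proof.
rewrite /Q mulr_sumr.
under eq_bigr => g /eqP hg do rewrite -[in (k.+1)%:R]hg natr_sum mulr_suml.
rewrite exchange_big /=; apply: eq_bigr => l _.
rewrite Dr_sum; under [RHS]eq_bigr do rewrite Dr_scal.
exact: Q_rec_l.
Qed.

End Comb.



Section Bnd.
Variables (R : realType) (n m : nat) (xi : 'I_m -> 'I_n -> R).
Hypothesis xi_ge0 : forall i k, 0 <= xi i k.
Hypothesis xi_sum : forall i, \sum_(k < n) xi i k = 1.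

Local Notation st := (st n m).
Local Notation Dr := (@Dr R n m xi).
Local Notation FoldR := (@FoldR R n m xi).
Local Notation Q := (@Q R n m xi).

Definition Bd k (a : nat) : R := (\prod_(d < k) (2 * (a + d)))%:R / (k`!)%:R.

Lemma fact_neq0 k : (k`!)%:R != 0 :> R.
Proof. by rewrite pnatr_eq0 -lt0n fact_gt0. Qed.

Lemma Bd_ge0 k a : 0 <= Bd k a.
Proof. by rewrite /Bd divr_ge0. Qed.

Lemma Bd_mono k a : Bd k a <= Bd k a.+1.
Proof.
rewrite /Bd ler_pM2r ?invr_gt0 ?ltr0n ?fact_gt0 // ler_nat.
by apply: leq_prod => d _; rewrite leq_mul2l addSn leqnSn orbT.
Qed.

Lemma Bd_S k a : Bd k.+1 a = (2 * a)%:R * Bd k a.+1 / (k.+1)%:R.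
Proof.
rewrite /Bd big_ord_recl /= addn0 factS natrM.
have -> : (\prod_(i < k) (2 * (a + bump 0 i)) = \prod_(i < k) (2 * (a.+1 + i)))%N.
  by apply: eq_bigr => i _; rewrite /bump /= add1n addnS.
rewrite natrM; have := fact_neq0 k; have : (k.+1)%:R != 0 :> R by rewrite pnatr_eq0.
move=> h1 h2; field.
by rewrite h2 andbT; rewrite -natr1 addrC in h1.
Qed.

Lemma sum_upd (I : finType) (f : I -> nat) l :
  (\sum_(j : I) upd f l j = \sum_(j : I) f j + 1)%N.
Proof.
rewrite /upd big_split /=; congr (_ + _)%N.
rewrite (bigD1 l) //= eqxx big1 ?addn0 //.
by move=> j /negbTE ->.
Qed.

Lemma foldR0 (h : st -> R) L : FoldR 1 (fun _ => 0%N) L h = h.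
Proof. by elim: L. Qed.

Lemma Q0 (h : st -> R) s : Q 1 0 h s = h s.
Proof.
pose g0 : {ffun 'I_n -> 'I_1} := [ffun => ord0].
rewrite /Q (big_pred1 g0).
  rewrite (_ : (fun j => (g0 j : nat)) = (fun _ => 0%N)); last first.
    by apply/funext => j; rewrite ffunE.
  by rewrite foldR0 big1 ?divr1 // => j _; rewrite ffunE.
move=> g /=; have -> : g = g0 by apply/ffunP => j; rewrite !ord1.
by rewrite eqxx big1 // => j _; rewrite ffunE.
Qed.

Lemma Q_bound k : forall a (s : st),
  (\sum_(j < n) s.1 j <= a)%N -> (\sum_(i < m) s.2 i <= a)%N ->
  Q 1 k (fun _ => 1) s <= Bd k a.
Proof.
elim: k => [|k IH] a s ha he.
  by rewrite Q0 /Bd big_ord0 divr1.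
have hk : 0 < (k.+1)%:R :> R by rewrite ltr0n.
have -> : Q 1 k.+1 (fun _ => 1) s =
   (\sum_(l < n) Dr 1 l (Q 1 k (fun _ => 1)) s) / (k.+1)%:R.
  by rewrite -Q_rec mulrAC divff ?mul1r // gt_eqF.
rewrite Bd_S ler_pM2r ?invr_gt0 //.
set B := Bd k a.+1.
have hQ1 : Q 1 k (fun _ => 1) s <= B by apply: le_trans (Bd_mono _ _); apply: IH.
have hQ2 : forall l i, Q 1 k (fun _ => 1) (upd s.1 l, upd s.2 i) <= B.
  by move=> l i; apply: IH; rewrite sum_upd addn1.
have hB : 0 <= B by apply: Bd_ge0.
apply: (@le_trans _ _ (\sum_(l < n) ((s.1 l)%:R * B + \sum_(i < m) (s.2 i)%:R * xi i l * B))).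
  apply: ler_sum => l _; rewrite /Dr mul1r; apply: lerD; first by rewrite ler_wpM2l.
  by apply: ler_sum => i _; rewrite ler_wpM2l // mulr_ge0.
rewrite big_split /= -mulr_suml exchange_big /=.
have -> : \sum_(i < m) \sum_(l < n) (s.2 i)%:R * xi i l * B = (\sum_(i < m) s.2 i)%:R * B.
  rewrite natr_sum mulr_suml; apply: eq_bigr => i _.
  by rewrite -mulr_suml -mulr_sumr xi_sum mulr1.
rewrite -mulrDl -natr_sum -natrD ler_wpM2r // ler_nat.
by rewrite mul2n -addnn leq_add.
Qed.

Lemma Bd_final k : Bd k m <= (expR 3 * m%:R) ^+ k.
Proof.
have hP : (\prod_(d < k) (2 * (m + d)) <= (2 * m) ^ k * k`!)%N.
  case: m => [|m'].
    case: k => [|k]; first by rewrite big_ord0.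
    by rewrite big_ord_recl /= mul0n.
  elim: k => [|k IH]; first by rewrite big_ord0.
  rewrite big_ord_recr /= factS expnS.
  have : (2 * (m'.+1 + k) <= 2 * m'.+1 * k.+1)%N by nia.
  move=> h; rewrite (mulnC k.+1) [X in (_ <= X)%N]mulnA.
  rewrite -[X in (_ <= X)%N]mulnA [X in (_ <= X)%N]mulnC.
  apply: (leq_trans (leq_mul IH h)); lia.
apply: (@le_trans _ _ ((2 * m)%:R ^+ k)).
  rewrite /Bd ler_pdivrMr ?ltr0n ?fact_gt0 // -natrX -natrM ler_nat //.
apply: lerXn2r.
- by rewrite nnegrE ler0n.
- by rewrite nnegrE mulr_ge0 // expR_ge0.
rewrite natrM ler_wpM2r //.
apply: (le_trans _ (expR_ge1Dx _)); lra.
Qed.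

End Bnd.



Lemma Gf0 (R : realType) (n m : nat) (xi : 'I_m -> 'I_n -> R) :
  (forall i, \sum_(k < n) xi i k = 1) -> forall s, @Gf R n m xi s 0 = 1.
Proof.
move=> hs s; rewrite /Gf /inner.
have hS : forall i, @S R n m xi i 0 = 1.
  move=> i; rewrite /S -[RHS](hs i); apply: eq_bigr => k _.
  by rewrite mxE expR0 mulr1.
rewrite big1; last by move=> j _; rewrite mxE mulr0.
rewrite big1 ?subr0 ?expR0 //.
by move=> i _; rewrite hS ln1 mulr0.
Qed.

Theorem lemmaB6 (R : realType) (n m : nat) (J : 'I_m -> 'I_n)
  (xi : 'I_m -> 'I_n -> R) :
  (forall i k, 0 <= xi i k) ->
  (forall i, \sum_(k < n) xi i k = 1) ->
  forall k : nat,
    \sum_(gamma : {ffun 'I_n -> 'I_k.+1} | (\sum_(j < n) (gamma j : nat) == k)%N)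
       `| taylor_coef (fun z => \prod_(i < m) softmax_type (J i) (xi i) z)
            (fun j => (gamma j : nat)) |
    <= (expR 3 * m%:R) ^+ k.
Proof.
move=> h0 h1 k.
pose s0 : st n m := (fun j => (\sum_(i < m) (J i == j))%N, fun _ => 1%N).
have hF : (fun z => \prod_(i < m) softmax_type (J i) (xi i) z) = @Gf R n m xi s0.
  apply/funext => z; rewrite /Gf /inner /softmax_type /=.
  have -> : \prod_(i < m) (expR (z ord0 (J i)) / \sum_(k0 < n) xi i k0 * expR (z ord0 k0))
       = \prod_(i < m) expR (z ord0 (J i) - ln (@S R n m xi i z)).
    apply: eq_bigr => i _; rewrite expRB lnK //.
    by rewrite posrE; apply: S_gt0.
  rewrite -expR_sum; congr expR.
  rewrite sumrB; congr (_ - _); last by apply: eq_bigr => i _; rewrite mul1r.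
  under [RHS]eq_bigr do rewrite natr_sum mulr_suml.
  rewrite exchange_big /=; apply: eq_bigr => i _.
  rewrite (bigD1 (J i)) //= eqxx mul1r big1 ?addr0 //.
  by move=> j /negbTE hj; rewrite eq_sym hj mul0r.
rewrite hF.
apply: (le_trans _ (@Bd_final R m k)).
have hs1 : (\sum_(j < n) s0.1 j <= m)%N.
  rewrite /= exchange_big /=.
  rewrite (eq_bigr (fun _ => 1%N)) ?sum1_card ?card_ord //.
  move=> i _; rewrite (bigD1 (J i)) //= eqxx big1 // => j /negbTE hj.
  by rewrite eq_sym hj.
have hs2 : (\sum_(i < m) s0.2 i <= m)%N by rewrite /= sum1_card card_ord.
apply: (le_trans _ (@Q_bound R n m xi h0 h1 k m s0 hs1 hs2)).
rewrite /Q; apply: ler_sum => g _.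
rewrite /taylor_coef /dpartial (@fold_partial R n m xi); last exact: good_Gf.
have := @fold_eval R n m xi (-1) (fun j => (g j : nat)) (enum 'I_n) (@Gf R n m xi) 0.
move=> /(congr1 (fun f => f s0)) /= ->.
rewrite (_ : (fun s => @Gf R n m xi s 0) = (fun _ => 1)); last first.
  by apply/funext => s; by apply: Gf0.
rewrite normrM normfV normr_nat ler_pM2r ?invr_gt0 ?ltr0n ?prodn_gt0 //.
  by apply: foldR_abs => // s; rewrite normr1.
by move=> j; apply: fact_gt0.
Qed.
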